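(* Let $\mathcal{A}=\mathbb{C}\setminus(-\infty,0]$ and let $H$ be the principal branch on $\mathcal{A}$ given by $H(z)=\ln\frac{z(1+z)}{1+z^2}\big/\ln\frac{1+z^2}{1+z}$ for $z\ne1$ and $H(1)=1$ (principal logarithm). For $z=re^{i\theta}\in\mathcal{A}$, the limit $\lim_{z\to0}\frac1{zH(z)}=0$ holds uniformly for $\theta\in[-\frac\pi2,\frac\pi2]$, and the limit $\lim_{z\to\infty}\frac1{z^2H(z)}=0$ holds uniformly for $\theta\in(-\pi,\pi)$.
   Context: $H$ is the holomorphic extension to $\mathcal{A}$ of $H(x)=\frac{\ln x}{\ln(x^2+1)-\ln(x+1)}-1$, $x\in(0,\infty)$. *)

(* Defs.v *)
From Stdlib Require Import Reals.
From Coquelicot Require Import Coquelicot.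
Open Scope R_scope.

(* Principal argument of a complex number, with values in (-PI, PI]:
   Arg (x + iy) = PI on the negative real axis, and 2 atan (y / (|z| + x))
   elsewhere (the standard half-angle formula for the principal argument).
   Arg 0 = 0 (irrelevant convention). *)
Definition Carg (z : C) : R :=
  if Req_EM_T (Im z) 0 then (if Rlt_dec (Re z) 0 then PI else 0)
  else 2 * atan (Im z / (Cmod z + Re z)).

Definition Clog (z : C) : C := (ln (Cmod z), Carg z).

Definition H (z : C) : C :=
  if Ceq_dec z 1 then 1%C
  else (Clog (z * (1 + z) / (1 + z * z)) / Clog ((1 + z * z) / (1 + z)))%C.

Definition polarC (r theta : R) : C := (r * cos theta, r * sin theta).

(* Main.v *)
Require Import Defs.
From Stdlib Require Import Reals Lra Psatz.
From Coquelicot Require Import Coquelicot.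
Open Scope R_scope.

Lemma ln_le_m1 x : 0 < x -> ln x <= x - 1.
Proof. intros Hx. rewrite <- (ln_exp (x-1)). apply ln_le; auto.
  pose proof (exp_ineq1_le (x-1)). lra. Qed.

Lemma ln_ge_m1 x : 0 < x -> 1 - / x <= ln x.
Proof. intros Hx. pose proof (ln_le_m1 (/x) (Rinv_0_lt_compat _ Hx)) as h.
  rewrite ln_Rinv in h by auto. lra. Qed.

Lemma atan_le_id u : 0 <= u -> atan u <= u.
Proof. intros Hu. destruct (Req_dec u 0) as [->|Hn]. rewrite atan_0; lra.
  destruct (MVT_cor2 atan (fun c => / (1 + c^2)) 0 u) as [c [Hc1 Hc2]]. lra.
  intros; apply derivable_pt_lim_atan.
  rewrite atan_0 in Hc1.
  assert (hc : 0 < / (1 + c^2) <= 1).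
  { split. apply Rinv_0_lt_compat; nra. rewrite <- Rinv_1. apply Rinv_le_contravar; nra. }
  nra. Qed.

Lemma atan_ge_half u : 0 <= u <= 1 -> u / 2 <= atan u.
Proof. intros Hu. destruct (Req_dec u 0) as [->|Hn]. rewrite atan_0; lra.
  destruct (MVT_cor2 atan (fun c => / (1 + c^2)) 0 u) as [c [Hc1 Hc2]]. lra.
  intros; apply derivable_pt_lim_atan.
  rewrite atan_0 in Hc1.
  assert (hc : /2 <= / (1 + c^2)).
  { apply Rinv_le_contravar; nra. }
  nra. Qed.

Lemma atan_abs_le u : Rabs (atan u) <= Rabs u.
Proof. destruct (Rle_dec 0 u).
  - pose proof (atan_le_id u r) as h1. assert (h2 : 0 <= atan u).
    { destruct (Req_dec u 0) as [->|]. rewrite atan_0; lra. rewrite <- atan_0; left; apply atan_increasing; lra. }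
    rewrite !Rabs_right; lra.
  - pose proof (atan_le_id (-u)) as h. rewrite atan_opp in h.
    assert (atan u < 0). { rewrite <- atan_0; apply atan_increasing; lra. }
    rewrite !Rabs_left; lra. Qed.

Lemma atan_abs_ge u : Rabs u <= 1 -> Rabs u / 2 <= Rabs (atan u).
Proof. intros h. destruct (Rle_dec 0 u).
  - rewrite Rabs_right in * by lra. pose proof (atan_ge_half u) as h1. 
    assert (u/2 <= atan u) by (apply h1; lra). rewrite Rabs_right; lra.
  - rewrite Rabs_left in * by lra. pose proof (atan_ge_half (-u)) as h2. rewrite atan_opp in h2.
    assert (-u/2 <= - atan u) by (apply h2; lra).
    assert (atan u < 0). { rewrite <- atan_0; apply atan_increasing; lra. }
    rewrite Rabs_left; lra. Qed.

Lemma Cmod_sum (z : C) : Cmod z <= Rabs (fst z) + Rabs (snd z).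
Proof. destruct z as [a b]. unfold Cmod; simpl.
  rewrite <- (sqrt_Rsqr (Rabs a + Rabs b)) by (pose proof (Rabs_pos a); pose proof (Rabs_pos b); lra).
  apply sqrt_le_1_alt. unfold Rsqr.
  pose proof (Rabs_pos a); pose proof (Rabs_pos b).
  pose proof (pow2_abs a); pose proof (pow2_abs b); simpl in *. nra. Qed.

Lemma Cmod_fst (z : C) : Rabs (fst z) <= Cmod z.
Proof. pose proof (Rmax_Cmod z). pose proof (Rmax_l (Rabs (fst z)) (Rabs (snd z))). lra. Qed.
Lemma Cmod_snd (z : C) : Rabs (snd z) <= Cmod z.
Proof. pose proof (Rmax_Cmod z). pose proof (Rmax_r (Rabs (fst z)) (Rabs (snd z))). lra. Qed.

Lemma Carg_abs w : Rabs (Carg w) <= PI.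
Proof. unfold Carg. pose proof PI_RGT_0.
  destruct Req_EM_T. destruct Rlt_dec; rewrite ?Rabs_R0, ?Rabs_right; lra.
  pose proof (atan_bound (Im w / (Cmod w + Re w))).
  apply Rabs_le; lra. Qed.

Lemma modm1 w : Rabs (Cmod w - 1) <= Cmod (w - 1).
Proof. pose proof (Cmod_triangle (w - 1) 1). pose proof (Cmod_triangle w (-(w-1))).
  rewrite Cmod_opp in H0. replace (w - 1 + 1)%C with w in H by ring.
  replace (w + - (w-1))%C with (RtoC 1) in H0 by ring. rewrite Cmod_1 in *.
  apply Rabs_le; lra. Qed.

Lemma Cmod_xy x y : Cmod (x,y) ^ 2 = x^2 + y^2.
Proof. rewrite Cmod2_alt. reflexivity. Qed.

Lemma ratio_bound x y : 0 < x -> 1 <= Cmod (x,y) + x ->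
  Rabs (y / (Cmod (x,y) + x)) <= Rabs y.
Proof. intros hx h. unfold Rdiv. rewrite Rabs_mult, Rabs_inv.
  rewrite (Rabs_right (_ + x)) by lra.
  assert (/ (Cmod (x,y) + x) <= 1). { rewrite <- Rinv_1. apply Rinv_le_contravar; lra. }
  pose proof (Rabs_pos y). assert (0 < / (Cmod (x,y) + x)) by (apply Rinv_0_lt_compat; lra). nra. Qed.

Lemma clog_upper w : Cmod (w - 1) <= 1/2 -> Cmod (Clog w) <= 4 * Cmod (w - 1).
Proof. intros ht. set (t := Cmod (w - 1)) in *.
  pose proof (modm1 w) as hm. fold t in hm.
  pose proof (Cmod_fst (w - 1)) as hf. pose proof (Cmod_snd (w - 1)) as hs. fold t in hf, hs.
  destruct w as [x y].
  replace (fst ((x,y) - 1)%C) with (x - 1) in hf by (simpl; ring).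
  replace (snd ((x,y) - 1)%C) with y in hs by (simpl; ring).
  set (rho := Cmod (x,y)) in *.
  apply Rabs_le_between in hm. apply Rabs_le_between in hf.
  assert (hrho : 1/2 <= rho) by lra.
  assert (hx : Rabs x <= rho) by (apply (Cmod_fst (x,y))).
  apply Rle_trans with (Rabs (ln rho) + Rabs (Carg (x,y))). apply (Cmod_sum (Clog (x,y))).
  assert (h1 : Rabs (ln rho) <= 2 * t).
  { pose proof (ln_le_m1 rho) as a. pose proof (ln_ge_m1 rho) as b.
    assert (/ rho <= 2). { replace 2 with (/ (1/2)) by field. apply Rinv_le_contravar; lra. }
    assert (rho * / rho = 1) by (field; lra).
    apply Rabs_le. split; [|lra]. assert (1 - / rho <= ln rho) by (apply b; lra). nra. }
  assert (h2 : Rabs (Carg (x,y)) <= 2 * t).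
  { unfold Carg; simpl Im; simpl Re. destruct Req_EM_T.
    destruct Rlt_dec. lra. rewrite Rabs_R0. lra.
    fold rho. rewrite Rabs_mult, (Rabs_right 2) by lra.
    pose proof (atan_abs_le (y / (rho + x))). pose proof (ratio_bound x y).
    fold rho in H0. assert (Rabs (y / (rho + x)) <= Rabs y) by (apply H0; lra). lra. }
  lra. Qed.

Lemma clog_lower w : Cmod (w - 1) <= 1/2 -> Cmod (w - 1) <= 6 * Cmod (Clog w).
Proof. intros ht. set (t := Cmod (w - 1)) in *.
  pose proof (modm1 w) as hm. fold t in hm.
  pose proof (Cmod_fst (w - 1)) as hf. pose proof (Cmod_snd (w - 1)) as hs. fold t in hf, hs.
  pose proof (Cmod_sum (w - 1)) as hsum. fold t in hsum.
  pose proof (Cmod_fst (Clog w)) as l1. pose proof (Cmod_snd (Clog w)) as l2.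
  set (L := Cmod (Clog w)) in *.
  destruct w as [x y].
  replace (fst ((x,y) - 1)%C) with (x - 1) in hf, hsum by (simpl; ring).
  replace (snd ((x,y) - 1)%C) with y in hs, hsum by (simpl; ring).
  simpl in l1, l2.
  pose proof (Cmod_xy x y) as hsq.
  set (rho := Cmod (x,y)) in *.
  apply Rabs_le_between in hm. apply Rabs_le_between in hf.
  assert (hrho : 1/2 <= rho) by lra.
  assert (hx : Rabs x <= rho) by (apply (Cmod_fst (x,y))).
  assert (hx0 : 1/2 <= x) by lra.
  assert (hrl : Rabs (rho - 1) <= 3/2 * L).
  { destruct (Rle_dec 1 rho).
    - pose proof (ln_ge_m1 rho) as b. assert (1 - / rho <= ln rho) by (apply b; lra).
      assert (rho * / rho = 1) by (field; lra).
      assert (0 < / rho) by (apply Rinv_0_lt_compat; lra).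
      assert (/ rho <= 1) by (rewrite <- Rinv_1; apply Rinv_le_contravar; lra). assert (0 <= ln rho) by lra. rewrite (Rabs_right (rho - 1)) by lra. rewrite (Rabs_right (ln rho)) in l1 by lra. nra.
    - pose proof (ln_le_m1 rho) as a. assert (ln rho <= rho - 1) by (apply a; lra).
      rewrite (Rabs_left (rho - 1)) by lra. rewrite (Rabs_left (ln rho)) in l1 by lra. lra. }
  assert (hy : Rabs y <= 3 * L).
  { unfold Carg in l2; simpl Im in l2; simpl Re in l2. destruct Req_EM_T.
    subst y. rewrite Rabs_R0. pose proof (Cmod_ge_0 (Clog (x,0))). fold L in H. lra.
    fold rho in l2. rewrite Rabs_mult, (Rabs_right 2) in l2 by lra.
    pose proof (ratio_bound x y) as rb. fold rho in rb.
    assert (Rabs (y / (rho + x)) <= Rabs y) by (apply rb; lra).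
    pose proof (atan_abs_ge (y / (rho + x))) as ag.
    assert (Rabs (y / (rho + x)) / 2 <= Rabs (atan (y / (rho + x)))) by (apply ag; lra).
    unfold Rdiv in H0. rewrite Rabs_mult, Rabs_inv, (Rabs_right (rho + x)) in H0 by lra.
    assert (/ 3 <= / (rho + x)) by (apply Rinv_le_contravar; lra).
    pose proof (Rabs_pos y). nra. }
  assert (hd : rho - x <= Rabs y / 2).
  { assert ((rho - x) * (rho + x) = y^2) by (assert (y^2 = rho^2 - x^2) by lra; rewrite H; ring).
    rewrite <- (pow2_abs y) in H. assert (0 <= rho - x) by (apply Rabs_le_between in hx; lra). assert (1 <= rho + x) by (apply Rabs_le_between in hx; lra). pose proof (Rabs_pos y). assert (rho - x <= (rho - x) * (rho + x)) by nra. nra. }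
  apply Rabs_le_between in hrl.
  assert (Rabs (x - 1) <= 3/2 * L + Rabs y / 2). { pose proof (Rle_abs x); pose proof (Rabs_pos y); apply Rabs_le; lra. }
  lra. Qed.

Lemma Cinv0 : Cinv 0 = 0.
Proof. unfold Cinv; simpl. apply injective_projections; simpl; unfold Rdiv; ring. Qed.

Lemma key (z a b : C) : 0 < Cmod z -> 0 < Cmod a ->
  Cmod (/ (z * (a / b))) <= Cmod b / (Cmod z * Cmod a).
Proof. intros hz ha. destruct (Ceq_dec b 0) as [->|hb].
  - unfold Cdiv. rewrite Cinv0, Cmult_0_r, Cmult_0_r, Cinv0, Cmod_0.
    unfold Rdiv. rewrite Rmult_0_l. lra.
  - assert (a <> 0) by (apply Cmod_gt_0; auto).
    assert (z <> 0) by (apply Cmod_gt_0; auto).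
    assert (hb' : 0 < Cmod b) by (apply Cmod_gt_0; auto).
    assert (hp : 0 < Cmod (z * (a / b))).
    { rewrite Cmod_mult, Cmod_div by auto. apply Rmult_lt_0_compat; auto.
      apply Rdiv_lt_0_compat; auto. }
    rewrite Cmod_inv by (apply Cmod_gt_0; auto).
    rewrite Cmod_mult, Cmod_div by auto. right. field. lra. Qed.

Lemma Cmod_polar r t : 0 <= r -> Cmod (polarC r t) = r.
Proof. intros hr. unfold polarC, Cmod; simpl.
  replace (r * cos t * (r * cos t * 1) + r * sin t * (r * sin t * 1)) with (r * r * ((sin t)² + (cos t)²)) by (unfold Rsqr; ring).
  rewrite sin2_cos2, Rmult_1_r. apply sqrt_square; auto. Qed.

Lemma tri_low a b : Cmod a - Cmod b <= Cmod (a + b).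
Proof. pose proof (Cmod_triangle (a + b) (- b)). rewrite Cmod_opp in H.
  replace (a + b + - b)%C with a in H by ring. lra. Qed.
Lemma tri_low2 a b : Cmod b - Cmod a <= Cmod (a + b).
Proof. rewrite Cplus_comm. apply tri_low. Qed.

Lemma divmono A A' Bv c r : 0 <= A <= A' -> 0 < c <= Bv -> 0 < r -> A / (r * Bv) <= A' / (r * c).
Proof. intros [h1 h2] [h3 h4] h5. unfold Rdiv. apply Rmult_le_compat; auto.
  left; apply Rinv_0_lt_compat; nra. apply Rinv_le_contravar; nra. Qed.

Lemma divle a a' b b' : 0 <= a <= a' -> 0 < b' <= b -> a / b <= a' / b'.
Proof. intros [h1 h2] [h3 h4]. unfold Rdiv. apply Rmult_le_compat; auto.
  left; apply Rinv_0_lt_compat; nra. apply Rinv_le_contravar; nra. Qed.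

Lemma mod1z z : Cmod (1 + z) <= 1 + Cmod z /\ 1 - Cmod z <= Cmod (1 + z) /\ Cmod z - 1 <= Cmod (1 + z).
Proof. pose proof (Cmod_triangle 1 z). pose proof (tri_low 1 z). pose proof (tri_low2 1 z).
  rewrite Cmod_1 in *. lra. Qed.

Lemma part1 z r : Cmod z = r -> 0 < r -> r <= 1/6 ->
  Cmod (/ (z * H z)) <= 12 / (- ln (2 * r)).
Proof. intros hz hr hr6. unfold H. destruct Ceq_dec as [e|ne].
  { subst z. rewrite Cmod_1 in hz. lra. }
  pose proof (mod1z z) as [a1 [a2 a3]].
  pose proof (mod1z (z*z)) as [b1 [b2 b3]]. rewrite Cmod_mult, hz in b1, b2, b3. rewrite hz in a1, a2, a3.
  assert (n1 : (1 + z)%C <> 0%C) by (apply Cmod_gt_0; lra).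
  assert (n2 : (1 + z * z)%C <> 0%C) by (apply Cmod_gt_0; nra).
  set (w1 := (z * (1 + z) / (1 + z * z))%C).
  set (w2 := ((1 + z * z) / (1 + z))%C).
  assert (hw1 : 0 < Cmod w1 <= 2 * r).
  { unfold w1. rewrite Cmod_div, Cmod_mult, hz by auto. split.
    apply Rdiv_lt_0_compat; nra.
    apply Rle_trans with (r * (1 + r) / (1 - r * r)). apply divle; pose proof (Cmod_ge_0 (1+z)); nra.
    replace (r * (1 + r) / (1 - r * r)) with (r / (1 - r)) by (field; nra).
    apply Rle_trans with (r / (1/2)). apply divle; lra. lra. }
  assert (hl1 : - ln (2 * r) <= Cmod (Clog w1)).
  { pose proof (Cmod_fst (Clog w1)) as h. simpl in h.
    assert (ln (Cmod w1) <= ln (2 * r)) by (apply ln_le; lra).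
    assert (ln (2 * r) < 0). { rewrite <- ln_1. apply ln_increasing; lra. }
    rewrite Rabs_left in h by lra. lra. }
  assert (hlp : 0 < - ln (2 * r)).
  { assert (ln (2 * r) < 0). { rewrite <- ln_1. apply ln_increasing; lra. } lra. }
  assert (hw2 : Cmod (w2 - 1) <= 3 * r).
  { replace (w2 - 1)%C with ((z * z - z) / (1 + z))%C by (unfold w2; field; auto).
    rewrite Cmod_div by auto.
    assert (Cmod (z * z - z) <= r * r + r).
    { unfold Cminus. eapply Rle_trans. apply Cmod_triangle. rewrite Cmod_opp, Cmod_mult, hz. lra. }
    apply Rle_trans with ((r * r + r) / (1 - r)).
    { apply divle. pose proof (Cmod_ge_0 (z*z-z)); lra. lra. }
    apply Rle_trans with ((r * r + r) / (1/2)). { apply divle; lra. }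
    replace ((r * r + r) / (1/2)) with (2 * (r * r + r)) by field. nra. }
  assert (hl2 : Cmod (Clog w2) <= 12 * r).
  { assert (hh : Cmod (w2 - 1) <= 1/2) by lra. pose proof (clog_upper w2 hh). lra. }
  eapply Rle_trans. apply key. lra. lra. rewrite hz.
  replace (12 / - ln (2 * r)) with (12 * r / (r * - ln (2 * r))) by (field; lra).
  apply divmono; try lra. split. apply Cmod_ge_0. lra.
Qed.

Lemma div_le a b c : 0 < b -> a <= c * b -> a / b <= c.
Proof. intros hb h. apply Rmult_le_reg_r with b; auto. unfold Rdiv.
  rewrite Rmult_assoc, Rinv_l by lra. lra. Qed.
Lemma le_div a b c : 0 < b -> c * b <= a -> c <= a / b.
Proof. intros hb h. apply Rmult_le_reg_r with b; auto. unfold Rdiv.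
  rewrite Rmult_assoc, Rinv_l by lra. lra. Qed.

Lemma part2 z r : Cmod z = r -> 3 <= r ->
  Cmod (/ (z * z * H z)) <= 12 * (ln (2 * r) + PI) / r.
Proof. intros hz hr. unfold H. destruct Ceq_dec as [e|ne].
  { subst z. rewrite Cmod_1 in hz. lra. }
  pose proof (mod1z z) as [a1 [a2 a3]].
  pose proof (mod1z (z*z)) as [b1 [b2 b3]]. rewrite Cmod_mult, hz in b1, b2, b3. rewrite hz in a1, a2, a3.
  assert (n1 : (1 + z)%C <> 0%C) by (apply Cmod_gt_0; lra).
  assert (n2 : (1 + z * z)%C <> 0%C) by (apply Cmod_gt_0; nra).
  set (w1 := (z * (1 + z) / (1 + z * z))%C).
  set (w2 := ((1 + z * z) / (1 + z))%C).
  assert (c1 : r - 1 <= Cmod (z - 1) <= r + 1).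
  { pose proof (tri_low z (-(1))). pose proof (Cmod_triangle z (-(1))). unfold Cminus.
    rewrite Cmod_opp, Cmod_1, hz in *. lra. }
  assert (e1 : (w1 - 1 = (z - 1) / (1 + z * z))%C) by (unfold w1; field; auto).
  assert (hw1u : Cmod (w1 - 1) <= 1/2).
  { rewrite e1, Cmod_div by auto. apply Rle_trans with ((r + 1) / (r * r - 1)).
    apply divle; nra. apply div_le; nra. }
  assert (hw1l : 1 / (2 * r) <= Cmod (w1 - 1)).
  { rewrite e1, Cmod_div by auto. apply Rle_trans with ((r - 1) / (r * r + 1)).
    apply le_div. nra. replace (1 / (2 * r) * (r * r + 1)) with ((r * r + 1) / (2 * r)) by (field; lra).
    apply div_le; nra. apply divle; nra. }
  assert (hl1 : 1 / (12 * r) <= Cmod (Clog w1)).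
  { pose proof (clog_lower w1 hw1u).
    replace (1 / (12 * r)) with (1 / (2 * r) / 6) by (field; lra). lra. }
  assert (hw2 : 1 <= Cmod w2 <= 2 * r).
  { unfold w2. rewrite Cmod_div by auto. split.
    apply le_div; nra. apply div_le; nra. }
  assert (hl2 : Cmod (Clog w2) <= ln (2 * r) + PI).
  { eapply Rle_trans. apply Cmod_sum. simpl fst; simpl snd.
    pose proof (Carg_abs w2).
    assert (0 <= ln (Cmod w2)) by (rewrite <- ln_1; apply ln_le; lra).
    assert (ln (Cmod w2) <= ln (2 * r)) by (apply ln_le; lra).
    rewrite Rabs_right by lra. lra. }
  assert (hz2 : Cmod (z * z) = r * r) by (rewrite Cmod_mult, hz; ring).
  eapply Rle_trans. apply key. rewrite hz2; nra. 
  assert (0 < 1 / (12 * r)) by (apply Rdiv_lt_0_compat; lra). lra.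
  rewrite hz2.
  replace (12 * (ln (2 * r) + PI) / r) with ((ln (2 * r) + PI) / (r * r * (1 / (12 * r)))) by (field; lra).
  apply divmono.
  - split. apply Cmod_ge_0. lra.
  - split. apply Rdiv_lt_0_compat; lra. lra.
  - nra.
Qed.

Lemma div_lt a b c : 0 < b -> a < c * b -> a / b < c.
Proof. intros hb h. apply Rmult_lt_reg_r with b; auto. unfold Rdiv.
  rewrite Rmult_assoc, Rinv_l by lra. lra. Qed.

Theorem lemma4p4 :
  (forall eps : R, 0 < eps ->
     exists delta : R, 0 < delta /\
       forall r theta : R, 0 < r < delta -> - (PI / 2) <= theta <= PI / 2 ->
         Cmod (/ (polarC r theta * H (polarC r theta)))%C < eps) /\
  (forall eps : R, 0 < eps ->
     exists M : R, 0 < M /\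
       forall r theta : R, M < r -> - PI < theta < PI ->
         Cmod (/ (polarC r theta * polarC r theta * H (polarC r theta)))%C < eps).
Proof. split.
  - intros eps he. exists (Rmin (1/6) (exp (- (12 / eps)) / 2)). split.
    { apply Rmin_glb_lt. lra. pose proof (exp_pos (- (12/eps))). lra. }
    intros r t [hr hd] _.
    pose proof (Rmin_l (1/6) (exp (- (12 / eps)) / 2)).
    pose proof (Rmin_r (1/6) (exp (- (12 / eps)) / 2)).
    eapply Rle_lt_trans. apply part1. apply Cmod_polar; lra. lra. lra.
    assert (ln (2 * r) < - (12 / eps)).
    { rewrite <- (ln_exp (- (12/eps))). apply ln_increasing; lra. }
    assert (0 < 12 / eps) by (apply Rdiv_lt_0_compat; lra).
    apply div_lt. lra.
    assert (12 = eps * (12 / eps)) by (field; lra). nra.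
  - intros eps he. set (K := 96 / eps). assert (hK : 0 < K) by (apply Rdiv_lt_0_compat; lra).
    exists (Rmax 3 (K * K)). split. { pose proof (Rmax_l 3 (K*K)). lra. }
    intros r t hr _.
    pose proof (Rmax_l 3 (K*K)). pose proof (Rmax_r 3 (K*K)).
    eapply Rle_lt_trans. apply part2. apply Cmod_polar; lra. lra.
    set (s := sqrt r).
    assert (hs : s * s = r) by (apply sqrt_sqrt; lra).
    assert (hs1 : 1 <= s). { unfold s. rewrite <- sqrt_1. apply sqrt_le_1_alt. lra. }
    assert (hsK : K < s). { unfold s. rewrite <- (sqrt_square K) by lra. apply sqrt_lt_1_alt. nra. }
    assert (hln : ln (2 * r) <= 4 * s).
    { assert (ln (2 * r) <= ln (r * r)) by (apply ln_le; nra).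
      rewrite (ln_mult r r) in H1 by lra.
      assert (ln r = ln s + ln s) by (rewrite <- hs; apply ln_mult; lra).
      assert (ln s <= s - 1) by (apply ln_le_m1; lra). lra. }
    pose proof PI_4.
    apply div_lt. lra.
    assert (eps * K = 96) by (unfold K; field; lra).
    assert (12 * (ln (2 * r) + PI) <= 96 * s) by lra.
    assert (eps * K * s < eps * s * s). { rewrite !Rmult_assoc. apply Rmult_lt_compat_l; nra. } replace (eps * r) with (eps * s * s) by (rewrite <- hs; ring). assert (eps * K * s = 96 * s) by (rewrite H2; ring). lra.
Qed.
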